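(* Let $p$ be a prime and $t\geq 2$. Then $\mathcal S(\mathbb Z_{p^t})\subseteq \mathcal S(\mathbb Z_{p^{t-1}})$, where $\mathcal S(\mathbb Z_n)$ denotes the set of determinants of $n\times n$ circulant matrices with integer entries. *)

(* Defs.v *)
From mathcomp Require Import all_boot all_algebra.
Set Implicit Arguments. Unset Strict Implicit. Unset Printing Implicit Defensive.
Import GRing.Theory.
Local Open Scope ring_scope.

(* The n x n circulant matrix with first row a_0, ..., a_{n-1}:
   entry (i, j) is a_{(j - i) mod n}.  Only a 0, ..., a (n-1) matter. *)
Definition circulant (n : nat) (a : nat -> int) : 'M[int]_n :=
  \matrix_(i < n, j < n) a (((j + n - i) %% n)%N).

Definition circ_dets (n : nat) : int -> Prop :=
  fun d => exists a : nat -> int, \det (circulant n a) = d.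

(* Main.v *)
Require Import Defs.
From mathcomp Require Import all_boot all_algebra all_field.
From mathcomp Require Import zify.
Import GRing.Theory Num.Theory.
Set Implicit Arguments. Unset Strict Implicit. Unset Printing Implicit Defensive.
Local Open Scope ring_scope.

Lemma eigen_det (F : fieldType) n (A W : 'M[F]_n) (lam : 'I_n -> F) :
  \det W != 0 -> (forall i k, \sum_j A i j * W j k = W i k * lam k) ->
  \det A = \prod_k lam k.
Proof.
move=> W0 H.
have E : A *m W = W *m diag_mx (\row_k lam k).
  by apply/matrixP=> i k; rewrite mul_mx_diag !mxE H.
have := congr1 determinant E; rewrite !det_mulmx det_diag mulrC.
move/(mulfI W0) => ->; apply: eq_bigr => i _; by rewrite mxE.
Qed.

Lemma vander_neq0 (F : fieldType) n (z : 'I_n -> F) : injective z ->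
  \det (\matrix_(j < n, k < n) z k ^+ j) != 0.
Proof.
move=> iz.
have -> : (\matrix_(j < n, k < n) z k ^+ j) = Vandermonde n (\row_k z k).
  by apply/matrixP=> i j; rewrite !mxE.
rewrite det_Vandermonde; apply/prodf_neq0 => i _; apply/prodf_neq0 => j lij.
rewrite !mxE subr_eq0; apply/eqP => /iz eij; move: lij; by rewrite eij ltnn.
Qed.

Lemma periodic_sum (R : nmodType) n (f : nat -> R) :
  (forall k, f (k + n)%N = f k) ->
  forall i, \sum_(0 <= s < n) f (s + i)%N = \sum_(0 <= s < n) f s.
Proof.
move=> per; elim=> [|i IH]; first by apply: eq_bigr => s _; rewrite addn0.
rewrite -IH; case: n per {IH} => [|n] per; first by rewrite !big_nil.
rewrite big_nat_recr //= big_nat_recl //= addrC; congr (_ + _).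
  by rewrite add0n addnS -addSn addnC per.
by apply: eq_bigr => s _; rewrite addnS addSn.
Qed.

Definition twc (R : pzRingType) p (tw : R) (c : nat -> R) : 'M[R]_p :=
  \matrix_(r < p, s < p) (c ((s + p - r) %% p)%N * (if (s < r)%N then tw else 1)).
Arguments twc {R} p tw c.

Lemma twc_det p (tw : algC) (c : nat -> algC) (z : 'I_p -> algC) :
  injective z -> (forall k, z k ^+ p = tw) ->
  \det (twc p tw c) = \prod_k \sum_(u < p) c u * z k ^+ u.
Proof.
move=> iz zp; apply: (@eigen_det _ _ _ (\matrix_(j < p, k < p) z k ^+ j)); first exact: vander_neq0.
move=> r k; rewrite !mxE; set x := z k.
pose phi u := c (u %% p)%N * x ^+ (r + u %% p).
have rp := ltn_ord r.
have E : forall s : 'I_p, twc p tw c r s * (\matrix_(j, k0) z k0 ^+ j) s k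
            = phi (s + (p - r))%N.
  move=> s; rewrite !mxE /phi -/x addnBA; last by apply: ltnW.
  have sp := ltn_ord s.
  case: ltnP => sr.
    have -> : ((s + p - r) %% p = s + p - r)%N by apply: modn_small; lia.
    rewrite -mulrA; congr (_ * _).
    have -> : (r + (s + p - r) = s + p)%N by lia.
    by rewrite exprD zp mulrC.
  have -> : ((s + p - r) %% p = s - r)%N.
    have -> : (s + p - r = (s - r) + p)%N by lia.
    by rewrite modnDr modn_small //; lia.
  rewrite mulr1; congr (_ * _); congr (_ ^+ _); lia.
rewrite (eq_bigr _ (fun s _ => E s)).
rewrite -(big_mkord xpredT (fun s => phi (s + (p - r))%N)).
rewrite periodic_sum; last by move=> u; rewrite /phi modnDr.
rewrite big_mkord mulr_sumr; apply: eq_bigr => u _.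
by rewrite /phi modn_small // exprD mulrCA.
Qed.

Lemma circ_det n (a : nat -> int) (zeta : algC) : n.-primitive_root zeta ->
  ((\det (circulant n a))%:~R : algC) =
  \prod_(k < n) \sum_(u < n) (a u)%:~R * (zeta ^+ k) ^+ u.
Proof.
move=> pz.
rewrite -(det_map_mx (intr : {rmorphism int -> algC})).
have -> : map_mx (intr : int -> algC) (circulant n a) = twc n (1 : algC) (fun u => (a u)%:~R).
  by apply/matrixP=> i j; rewrite !mxE if_same mulr1.
apply: twc_det => [i j /eqP|k]; last by rewrite exprAC (prim_expr_order pz) expr1n.
rewrite (eq_prim_root_expr pz) !modn_small // => /eqP; exact: val_inj.
Qed.

Definition Fr (a : nat -> int) p m r : {poly int} :=
  \sum_(q < m) (a (r + q * p)%N)%:P * 'X^q.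
Definition Gp a p m : {poly int} := \det (twc p 'X (Fr a p m)).
Definition bseq (G : {poly int}) m (l : nat) : int :=
  \sum_(j < size G) (if (j %% m == l)%N then G`_j else 0).
Definition phi p (x : algC) : {rmorphism {poly int} -> algC} :=
  horner_eval (x ^+ p) \o map_poly intr.

Lemma phiE p x q : phi p x q = (map_poly intr q).[x ^+ p].
Proof. by []. Qed.

Lemma stepA (G : {poly int}) m (w : algC) : (0 < m)%N -> w ^+ m = 1 ->
  \sum_(u < m) ((bseq G m u)%:~R) * w ^+ u = (map_poly intr G).[w].
Proof.
move=> m0 wm.
rewrite horner_coef size_map_inj_poly; [|exact: intr_inj|by rewrite rmorph0].
under eq_bigr => u _ do rewrite /bseq rmorph_sum mulr_suml.
rewrite exchange_big /=; apply: eq_bigr => j _.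
rewrite coef_map /=.
rewrite (bigD1 (Ordinal (ltn_pmod j m0))) //= eqxx big1 ?addr0.
  by rewrite expr_mod.
move=> u /negbTE nu; case: ifP => [/eqP ju|]; last by rewrite mul0r.
by move: nu; rewrite -val_eqE /= ju eqxx.


Qed.

Lemma stepC a p m (x y : algC) : y ^+ p = x ^+ p ->
  \sum_(u < p) phi p x (Fr a p m u) * y ^+ u =
  \sum_(u < m * p) (a u)%:~R * y ^+ u.
Proof.
move=> yp.
rewrite -(big_mkord xpredT (fun u => (a u)%:~R * y ^+ u)) big_nat_mul big_mkord.
have E : forall u, phi p x (Fr a p m u) * y ^+ u =
   \sum_(q < m) (a (u + q * p)%N)%:~R * y ^+ (u + q * p).
  move=> u; rewrite /Fr rmorph_sum mulr_suml; apply: eq_bigr => q _.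
  rewrite rmorphM rmorphXn !phiE map_polyC map_polyX hornerC hornerX /=.
  by rewrite -yp -exprM mulnC exprD mulrAC mulrA.
under eq_bigr => u _ do rewrite E.
rewrite exchange_big /=.
apply: eq_bigr => q _.

rewrite [in RHS](_ : (q * p = 0 + q * p)%N) // big_addn mulSn addnK big_mkord.
by apply: eq_bigr => u _; rewrite addnC.
Qed.

Lemma stepB a p m (x omega : algC) : p.-primitive_root omega -> x != 0 ->
  phi p x (Gp a p m) =
  \prod_(s < p) \sum_(u < m * p) (a u)%:~R * (omega ^+ s * x) ^+ u.
Proof.
move=> po x0.
have opow : forall s : 'I_p, (omega ^+ s * x) ^+ p = x ^+ p.
  by move=> s; rewrite exprMn exprAC (prim_expr_order po) expr1n mul1r.
rewrite /Gp -det_map_mx.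
have -> : map_mx (phi p x) (twc p 'X (Fr a p m)) =
          twc p (x ^+ p) (fun u => phi p x (Fr a p m u)).
  apply/matrixP => i j; rewrite !mxE rmorphM; case: ifP => _.
    by congr (_ * _); rewrite phiE map_polyX hornerX.
  by rewrite rmorph1.
rewrite (@twc_det _ _ _ (fun s : 'I_p => omega ^+ s * x)) //.
- by apply: eq_bigr => s _; apply: stepC.
- move=> i j /(mulIf x0) /eqP; rewrite (eq_prim_root_expr po) !modn_small //.
  by move/eqP; exact: val_inj.
Qed.

Lemma main_lemma p m (d : int) : (0 < p)%N -> (0 < m)%N ->
  circ_dets (m * p) d -> circ_dets m d.
Proof.
move=> p0 m0 [a <-].
have n0 : (0 < m * p)%N by rewrite muln_gt0 m0.
have [zeta pz] := C_prim_root_exists n0.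
have z0 : zeta != 0.
  apply/eqP => z0; move: (prim_expr_order pz); rewrite z0 expr0n.
  case: (m * p)%N n0 => // n _ /eqP; by rewrite eq_sym oner_eq0.
have peta : m.-primitive_root (zeta ^+ p).
  by have := exp_prim_root pz p; rewrite gcdnMl mulnK.
have pom : p.-primitive_root (zeta ^+ m).
  by have := exp_prim_root pz m; rewrite gcdnMr mulKn.
exists (bseq (Gp a p m) m).
apply: (@intr_inj algC).
rewrite (circ_det _ peta) (circ_det _ pz).
transitivity (\prod_(k < m) phi p (zeta ^+ k) (Gp a p m)).
  apply: eq_bigr => k _; rewrite stepA //; last first.
    by rewrite exprAC (prim_expr_order peta) expr1n.
  by rewrite phiE exprAC.
under eq_bigr => k _ do rewrite (stepB _ _ pom (expf_neq0 _ z0)).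
rewrite -(big_mkord xpredT (fun k => \sum_(u < m * p) (a u)%:~R * (zeta ^+ k) ^+ u)).
rewrite mulnC big_nat_mul big_mkord exchange_big /=.
apply: eq_bigr => k _.
rewrite [in RHS](_ : (k * m = 0 + k * m)%N) // big_addn mulSn addnK big_mkord.
apply: eq_bigr => s _; apply: eq_bigr => u _.
by rewrite -exprM -exprD addnC (mulnC m k).
Qed.

Local Close Scope ring_scope.

Theorem proposition1p4 (p t : nat) (hp : prime p) (ht : (2 <= t)%N) :
  forall d : int, circ_dets (p ^ t) d -> circ_dets (p ^ (t - 1)) d.
Proof.
move=> d.
have p0 : (0 < p)%N := prime_gt0 hp.
have -> : (p ^ t = p ^ (t - 1) * p)%N by rewrite -expnSr; congr (_ ^ _); lia.
apply: main_lemma => //; by rewrite expn_gt0 p0.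
Qed.
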